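(* Let $\mathcal S$ be a set of density matrices on finite-dimensional Hilbert spaces that is closed under tensor products and under permutations of tensor factors, and let $f$ be a real-valued function on pairs $(\rho,\sigma)$ with $\sigma\in\mathcal S$ and $\rho$ a density matrix on $\mathcal H_\sigma$, which is locally monotonic with respect to $\mathcal S$. Then $f'(\rho,\sigma):=f(\rho,\sigma)-f(\sigma,\sigma)$ is additive under tensor products: for all $\sigma_1,\sigma_2\in\mathcal S$ and density matrices $\rho_i$ on $\mathcal H_{\sigma_i}$, $$f'(\rho_1\otimes\rho_2,\sigma_1\otimes\sigma_2)=f'(\rho_1,\sigma_1)+f'(\rho_2,\sigma_2).$$
   Context: For $\sigma\in\mathcal S$, $\mathcal H_\sigma$ is the Hilbert space on which $\sigma$ acts and $\mathcal C_\sigma$ is the set of quantum channels $C$ on $\mathcal H_\sigma$ with $C[\sigma]=\sigma$. Closure under permutations means $\sigma\otimes\sigma'\in\mathcal S\Rightarrow\sigma'\otimes\sigma\in\mathcal S$. $f$ is locally monotonic with respect to $\mathcal S$ if for all $\sigma_1,\sigma_2\in\mathcal S$, all $C\in\mathcal C_{\sigma_1\otimes\sigma_2}$ and all density matrices $\rho_i$ on $\mathcal H_{\sigma_i}$: $f(\rho_1,\sigma_1)+f(\rho_2,\sigma_2)\ge f(\rho'_1,\sigma_1)+f(\rho'_2,\sigma_2)$, where $\rho'_1=\mathrm{Tr}_2[C(\rho_1\otimes\rho_2)]$, $\rho'_2=\mathrm{Tr}_1[C(\rho_1\otimes\rho_2)]$. *)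

(* Defs.v *)
From HB Require Import structures.
From mathcomp Require Import all_boot all_order all_algebra.
From mathcomp Require Import reals complex mxtens.
Set Implicit Arguments. Unset Strict Implicit. Unset Printing Implicit Defensive.
Import Order.TTheory GRing.Theory Num.Theory.
Local Open Scope ring_scope.

Section Quantum.
Variable C : numClosedFieldType.

Definition adjmx m n (A : 'M[C]_(m, n)) : 'M[C]_(n, m) := (map_mx Num.conj A)^T.

Definition hermitian n (A : 'M[C]_n) : Prop := adjmx A = A.
Definition psd n (A : 'M[C]_n) : Prop :=
  hermitian A /\ forall v : 'cV[C]_n, 0 <= (adjmx v *m A *m v) 0 0.
Definition density n (A : 'M[C]_n) : Prop := psd A /\ \tr A = 1.

(* block (a,b) of a matrix on C^k (x) C^n, using the Kronecker index convention of mxtens *)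
Definition mxblock_of k n (X : 'M[C]_(k * n)) (a b : 'I_k) : 'M[C]_n :=
  \matrix_(p, q) X (mxtens_index (a, p)) (mxtens_index (b, q)).

(* (id_k (x) Phi) applied to X *)
Definition ampliate k n (Phi : 'M[C]_n -> 'M[C]_n) (X : 'M[C]_(k * n)) : 'M[C]_(k * n) :=
  \matrix_(i, j) Phi (mxblock_of X (mxtens_unindex i).1 (mxtens_unindex j).1)
                     (mxtens_unindex i).2 (mxtens_unindex j).2.

Definition linear_map n (Phi : 'M[C]_n -> 'M[C]_n) : Prop :=
  forall (a : C) (A B : 'M[C]_n), Phi (a *: A + B) = a *: Phi A + Phi B.

Definition completely_positive n (Phi : 'M[C]_n -> 'M[C]_n) : Prop :=
  forall k (X : 'M[C]_(k * n)), psd X -> psd (ampliate Phi X).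

Definition trace_preserving n (Phi : 'M[C]_n -> 'M[C]_n) : Prop :=
  forall A : 'M[C]_n, \tr (Phi A) = \tr A.

Definition channel n (Phi : 'M[C]_n -> 'M[C]_n) : Prop :=
  [/\ linear_map Phi, completely_positive Phi & trace_preserving Phi].

Definition ptrace2 m n (X : 'M[C]_(m * n)) : 'M[C]_m :=
  \matrix_(a, b) \sum_(j < n) X (mxtens_index (a, j)) (mxtens_index (b, j)).
Definition ptrace1 m n (X : 'M[C]_(m * n)) : 'M[C]_n :=
  \matrix_(a, b) \sum_(i < m) X (mxtens_index (i, a)) (mxtens_index (i, b)).

End Quantum.

Definition states (C : numClosedFieldType) := forall n : nat, 'M[C]_n -> Prop.

Definition states_are_density (C : numClosedFieldType) (S : states C) : Prop :=
  forall n (s : 'M[C]_n), S n s -> density s.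
Definition closed_tensor (C : numClosedFieldType) (S : states C) : Prop :=
  forall m n (s1 : 'M[C]_m) (s2 : 'M[C]_n), S m s1 -> S n s2 -> S (m * n)%N (s1 *t s2).
Definition closed_perm (C : numClosedFieldType) (S : states C) : Prop :=
  forall m n (s1 : 'M[C]_m) (s2 : 'M[C]_n), S (m * n)%N (s1 *t s2) -> S (n * m)%N (s2 *t s1).

Definition locally_monotonic (R : realType) (S : states R[i])
    (f : forall n, 'M[R[i]]_n -> 'M[R[i]]_n -> R) : Prop :=
  forall m n (s1 : 'M[R[i]]_m) (s2 : 'M[R[i]]_n)
         (Phi : 'M[R[i]]_(m * n) -> 'M[R[i]]_(m * n))
         (r1 : 'M[R[i]]_m) (r2 : 'M[R[i]]_n),
    S m s1 -> S n s2 -> channel Phi -> Phi (s1 *t s2) = s1 *t s2 ->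
    density r1 -> density r2 ->
    f m (ptrace2 (Phi (r1 *t r2))) s1 + f n (ptrace1 (Phi (r1 *t r2))) s2
      <= f m r1 s1 + f n r2 s2.

Definition fprime (R : realType) (f : forall n, 'M[R[i]]_n -> 'M[R[i]]_n -> R)
    n (r s : 'M[R[i]]_n) : R := f n r s - f n s s.

(* Main.v *)
Require Import Defs.
From HB Require Import structures.
From mathcomp Require Import all_boot all_order all_algebra.
From mathcomp Require Import reals complex mxtens.
From mathcomp Require spectral.
Import Order.TTheory GRing.Theory Num.Theory.
Local Open Scope ring_scope.
Set Implicit Arguments. Unset Strict Implicit. Unset Printing Implicit Defensive.

Section G.
Variable C : numClosedFieldType.

Lemma adjmxM m n p (A : 'M[C]_(m, n)) (B : 'M[C]_(n, p)) :
  adjmx (A *m B) = adjmx B *m adjmx A.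
Proof. by rewrite /adjmx map_mxM trmx_mul. Qed.

Lemma adjmxK m n (A : 'M[C]_(m, n)) : adjmx (adjmx A) = A.
Proof. by apply/matrixP => i j; rewrite !mxE conjCK. Qed.

Lemma adjmx_tens m n p q (A : 'M[C]_(m, n)) (B : 'M[C]_(p, q)) :
  adjmx (A *t B) = adjmx A *t adjmx B.
Proof. by apply/matrixP => i j; rewrite !mxE rmorphM. Qed.

Lemma psd_adjM m n (M : 'M[C]_(m, n)) : psd (adjmx M *m M).
Proof.
split; first by rewrite /Defs.hermitian adjmxM adjmxK.
move=> v; rewrite mulmxA -adjmxM -mulmxA.
rewrite !mxE; apply: sumr_ge0 => k _; rewrite !mxE.
by rewrite mulrC mul_conjC_ge0.
Qed.

Lemma mxtrace_tens m n (A : 'M[C]_m) (B : 'M[C]_n) : \tr (A *t B) = \tr A * \tr B.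
Proof. by rewrite /mxtrace mulr_sum; apply: eq_bigr => i _; rewrite mxE. Qed.


Lemma adjE m n (M : 'M[C]_(m, n)) : adjmx M = map_mx Num.conj (M^T).
Proof. by rewrite /adjmx map_trmx. Qed.

Lemma adj_delta n (i : 'I_n) : adjmx (delta_mx i 0 : 'cV[C]_n) = delta_mx 0 i.
Proof.
apply/matrixP => a b; rewrite !mxE.
by rewrite andbC; case: (_ && _); rewrite /= ?rmorph1 ?rmorph0.
Qed.

Lemma psd_factor n (A : 'M[C]_n) : psd A -> exists M : 'M[C]_n, A = adjmx M *m M.
Proof.
move=> [hA Apos].
have Anorm : A \is spectral.normalmx.
  by apply/spectral.normalmxP; rewrite -adjE hA.
move/spectral.orthomx_spectralP: Anorm.
set P := spectral.spectralmx A; set d := spectral.spectral_diag A => eA.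
have hU : P \is spectral.unitarymx := spectral.spectral_unitarymx A.
rewrite (spectral.invmx_unitary hU) -adjE in eA.
have PQ : P *m adjmx P = 1%:M by rewrite adjE; apply/spectral.unitarymxP.
have QP : adjmx P *m P = 1%:M by apply: mulmx1C.
have K k (X : 'M[C]_(k, n)) : X *m P *m adjmx P = X by rewrite -mulmxA PQ mulmx1.
have dge0 i : 0 <= d 0 i.
  have := Apos (adjmx P *m delta_mx i 0).
  rewrite adjmxM adjmxK eA !mulmxA !K adj_delta -rowE -colE !mxE eqxx mulr1n.
  done.
exists (diag_mx (map_mx sqrtC d) *m P).
have Dad : adjmx (diag_mx (map_mx sqrtC d)) = diag_mx (map_mx sqrtC d).
  apply/matrixP => a b; rewrite !mxE; case: eqVneq => [->|ab].
    by rewrite !mulr1n geC0_conj // sqrtC_ge0.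
  by rewrite !mulr0n rmorph0.
rewrite adjmxM Dad eA !mulmxA -[_ *m diag_mx _ *m diag_mx _]mulmxA mulmx_diag.
congr (_ *m _ *m _); congr diag_mx; apply/rowP => j; rewrite !mxE.
by rewrite -expr2 sqrtCK.
Qed.

Lemma psd_tens m n (A : 'M[C]_m) (B : 'M[C]_n) : psd A -> psd B -> psd (A *t B).
Proof.
move=> /psd_factor [M ->] /psd_factor [N ->].
rewrite -tensmx_mul -adjmx_tens; exact: psd_adjM.
Qed.

Lemma density_tens m n (A : 'M[C]_m) (B : 'M[C]_n) :
  density A -> density B -> density (A *t B).
Proof.
move=> [pA tA] [pB tB]; split; first exact: psd_tens.
by rewrite mxtrace_tens tA tB mulr1.
Qed.


Definition reidx N (pi : 'I_N -> 'I_N) (X : 'M[C]_N) : 'M[C]_N :=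
  \matrix_(i, j) X (pi i) (pi j).

Lemma qform n (v : 'cV[C]_n) (X : 'M[C]_n) :
  (adjmx v *m X *m v) 0 0 = \sum_j \sum_i (v i 0)^* * X i j * v j 0.
Proof.
rewrite !mxE; apply: eq_bigr => j _; rewrite !mxE mulr_suml.
apply: eq_bigr => i _; by rewrite !mxE.
Qed.

Lemma psd_reidx N (pi : 'I_N -> 'I_N) (X : 'M[C]_N) :
  injective pi -> psd X -> psd (reidx pi X).
Proof.
move=> ipi [hX pX]; split; rewrite /Defs.hermitian in hX *.
  apply/matrixP => i j; have := congr1 (fun M : 'M[C]_N => M (pi i) (pi j)) hX.
  by rewrite /= !mxE.
move=> v; pose w : 'cV[C]_N := \col_k v (invF ipi k) 0.
rewrite qform.
have -> : \sum_j \sum_i (v i 0)^* * reidx pi X i j * v j 0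
        = \sum_j \sum_i (w i 0)^* * X i j * w j 0.
  rewrite [RHS](reindex_inj ipi); apply: eq_bigr => j _.
  rewrite [RHS](reindex_inj ipi); apply: eq_bigr => i _.
  by rewrite !mxE !invF_f.
by rewrite -qform.
Qed.

Lemma reidx_channel N (pi : 'I_N -> 'I_N) : injective pi -> channel (reidx pi).
Proof.
move=> ipi; split.
- by move=> a A B; apply/matrixP => i j; rewrite !mxE.
- move=> k X pX.
  pose pi' (i : 'I_(k * N)) := mxtens_index ((mxtens_unindex i).1, pi (mxtens_unindex i).2).
  have ipi' : injective pi'.
    move=> i j e; have := congr1 (@mxtens_unindex k N) e.
    rewrite /pi' !mxtens_indexK => E.
    apply: (can_inj (@mxtens_unindexK k N)); apply: injective_projections.
      exact: (congr1 fst E).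
    apply: ipi; exact: (congr1 snd E).
  have -> : ampliate (reidx pi) X = reidx pi' X.
    by apply/matrixP => i j; rewrite !mxE.
  exact: psd_reidx.
- move=> A; rewrite /mxtrace [RHS](reindex_inj ipi) /=; apply: eq_bigr => i _; by rewrite mxE.
Qed.

Lemma ptrace2_tens m n (A : 'M[C]_m) (B : 'M[C]_n) : ptrace2 (A *t B) = \tr B *: A.
Proof.
apply/matrixP => a b; rewrite !mxE /mxtrace mulr_suml; apply: eq_bigr => j _.
by rewrite tensmxE mulrC.
Qed.

Lemma ptrace1_tens m n (A : 'M[C]_m) (B : 'M[C]_n) : ptrace1 (A *t B) = \tr A *: B.
Proof.
apply/matrixP => a b; rewrite !mxE /mxtrace mulr_suml; apply: eq_bigr => j _.
by rewrite tensmxE.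
Qed.


Definition swap1 m n (i : 'I_(m * (m * n))) : 'I_(m * (m * n)) :=
  let a := (@mxtens_unindex m (m * n) i).1 in let k := (@mxtens_unindex m (m * n) i).2 in
  let b := (@mxtens_unindex m n k).1 in let c := (@mxtens_unindex m n k).2 in
  @mxtens_index m (m * n) (b, @mxtens_index m n (a, c)).

Definition swap2 m n (i : 'I_(n * (m * n))) : 'I_(n * (m * n)) :=
  let a := (@mxtens_unindex n (m * n) i).1 in let k := (@mxtens_unindex n (m * n) i).2 in
  let b := (@mxtens_unindex m n k).1 in let c := (@mxtens_unindex m n k).2 in
  @mxtens_index n (m * n) (c, @mxtens_index m n (b, a)).

Lemma swap1E m n a b c :
  @swap1 m n (mxtens_index (a, mxtens_index (b, c))) = mxtens_index (b, mxtens_index (a, c)).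
Proof. by rewrite /swap1 !mxtens_indexK. Qed.

Lemma swap1K m n : involutive (@swap1 m n).
Proof.
move=> i; case: (mxtens_indexP i) => a k; case: (mxtens_indexP k) => b c.
by rewrite !swap1E.
Qed.

Lemma swap2E m n a b c :
  @swap2 m n (mxtens_index (a, mxtens_index (b, c))) = mxtens_index (c, mxtens_index (b, a)).
Proof. by rewrite /swap2 !mxtens_indexK. Qed.

Lemma swap2K m n : involutive (@swap2 m n).
Proof.
move=> i; case: (mxtens_indexP i) => a k; case: (mxtens_indexP k) => b c.
by rewrite !swap2E.
Qed.

Lemma swap1_tens m n (x y : 'M[C]_m) (z : 'M[C]_n) :
  reidx (@swap1 m n) (x *t (y *t z)) = y *t (x *t z).
Proof.
apply/matrixP => i j; case: (mxtens_indexP i) => a k; case: (mxtens_indexP k) => b c.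
case: (mxtens_indexP j) => a' k'; case: (mxtens_indexP k') => b' c'.
rewrite mxE !swap1E !tensmxE.
by rewrite mulrCA.
Qed.

Lemma swap2_tens m n (x : 'M[C]_n) (y : 'M[C]_m) (z : 'M[C]_n) :
  reidx (@swap2 m n) (x *t (y *t z)) = z *t (y *t x).
Proof.
apply/matrixP => i j; case: (mxtens_indexP i) => a k; case: (mxtens_indexP k) => b c.
case: (mxtens_indexP j) => a' k'; case: (mxtens_indexP k') => b' c'.
rewrite mxE !swap2E !tensmxE.
by rewrite mulrC [y b b' * _]mulrC mulrA.
Qed.

End G.

From mathcomp Require Import lra.
Unset Implicit Arguments. Set Strict Implicit.

Theorem lemma36 (R : realType) (S : states R[i])
    (f : forall n, 'M[R[i]]_n -> 'M[R[i]]_n -> R) :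
  states_are_density S -> closed_tensor S -> closed_perm S ->
  locally_monotonic S f ->
  forall m n (s1 : 'M[R[i]]_m) (s2 : 'M[R[i]]_n) (r1 : 'M[R[i]]_m) (r2 : 'M[R[i]]_n),
    S m s1 -> S n s2 -> density r1 -> density r2 ->
    fprime f (r1 *t r2) (s1 *t s2) = fprime f r1 s1 + fprime f r2 s2.
Proof.
move=> Sd Stens _ Hmon m n s1 s2 r1 r2 S1 S2 d1 d2.
have S12 := Stens _ _ _ _ S1 S2.
have ds1 := Sd _ _ S1; have ds2 := Sd _ _ S2; have ds12 := Sd _ _ S12.
have t1 : \tr r1 = 1 by case: d1.
have t2 : \tr r2 = 1 by case: d2.
have u1 : \tr s1 = 1 by case: ds1.
have u2 : \tr s2 = 1 by case: ds2.
have ch1 := @reidx_channel R[i] _ _ (can_inj (@swap1K m n)).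
have ch2 := @reidx_channel R[i] _ _ (can_inj (@swap2K m n)).
have h1 := Hmon m (m * n)%N s1 (s1 *t s2) _ r1 (s1 *t r2) S1 S12 ch1
  (swap1_tens s1 s1 s2) d1 (density_tens ds1 d2).
have h2 := Hmon m (m * n)%N s1 (s1 *t s2) _ s1 (r1 *t r2) S1 S12 ch1
  (swap1_tens s1 s1 s2) ds1 (density_tens d1 d2).
have h3 := Hmon n (m * n)%N s2 (s1 *t s2) _ r2 (s1 *t s2) S2 S12 ch2
  (swap2_tens s2 s1 s2) d2 ds12.
have h4 := Hmon n (m * n)%N s2 (s1 *t s2) _ s2 (s1 *t r2) S2 S12 ch2
  (swap2_tens s2 s1 s2) ds2 (density_tens ds1 d2).
rewrite swap1_tens ptrace2_tens ptrace1_tens ?mxtrace_tens ?t1 ?t2 ?u1 ?u2 ?mul1r !scale1r in h1.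
rewrite swap1_tens ptrace2_tens ptrace1_tens ?mxtrace_tens ?t1 ?t2 ?u1 ?u2 ?mul1r !scale1r in h2.
rewrite swap2_tens ptrace2_tens ptrace1_tens ?mxtrace_tens ?t1 ?t2 ?u1 ?u2 ?mul1r !scale1r in h3.
rewrite swap2_tens ptrace2_tens ptrace1_tens ?mxtrace_tens ?t1 ?t2 ?u1 ?u2 ?mul1r !scale1r in h4.
rewrite /fprime; lra.
Qed.
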